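(* Let $H=(V,E)$ be a $k$-uniform hypergraph such that every strongly connected component of $H$ contains a copy of $K_{k+1}^k$ (i.e. a set of $k+1$ vertices all of whose $k$-subsets are hyperedges). Then $\operatorname{rank}\mathcal A_d(H)=|V|$ for all $d\geq k$.
   Context: A $k$-uniform hypergraph $H=(V,E)$ has finite vertex set $V$ and hyperedges $E$, $k$-subsets of $V$. $H$ is strongly connected if for any two distinct $\Delta,\Delta'\in E$ there are hyperedges $\Delta=\Delta_1,\Delta_2,\dots,\Delta_m=\Delta'$ with $|\Delta_i\cap\Delta_{i+1}|=k-1$ for all $i$; strongly connected components are the maximal strongly connected sub-hypergraphs (their hyperedge sets partition $E$). For $p:V\to\mathbb R^d$ with $p(\Delta)$ in general position for every $\Delta\in E$, let $p_\Delta$ be the orthogonal projection of the origin onto the affine span of $p(\Delta)$, written uniquely as $p_\Delta=\sum_{x\in\Delta}\alpha_x p(x)$ with $\sum_{x\in\Delta}\alpha_x=1$; $A(H,p)$ is the $|E|\times|V|$ matrix with entry $\alpha_x$ in row $\Delta$, column $x$ if $x\in\Delta$ and $0$ otherwise. $\mathcal A_d(H)$ is the row matroid of $A(H,p)$ for generic $p:V\to\mathbb R^d$ (coordinates algebraically independent over $\mathbb Q$). *)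

(* Defs.v *)
From HB Require Import structures.
From mathcomp Require Import all_boot all_order all_algebra.
From mathcomp Require Import reals.
From mathcomp Require Import mpoly.
Set Implicit Arguments. Unset Strict Implicit. Unset Printing Implicit Defensive.
Import Order.TTheory GRing.Theory Num.Theory.
Local Open Scope ring_scope.

Definition alg_indep_Q (R : realType) (I : finType) (x : I -> R) : Prop :=
  forall q : {mpoly rat[#|I|]}, q != 0 ->
    mmap (fun c : rat => ratr c) (fun i : 'I_#|I| => x (enum_val i)) q != 0.

Definition generic (R : realType) (V : finType) (d : nat) (p : V -> 'rV[R]_d) :=
  alg_indep_Q (fun xi : V * 'I_d => p xi.1 0 xi.2).

Definition dotp (R : realType) (d : nat) (u v : 'rV[R]_d) : R :=
  \sum_(i < d) u 0 i * v 0 i.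

Definition k_uniform (V : finType) (k : nat) (E : {set {set V}}) : Prop :=
  forall D, D \in E -> #|D| = k.

Definition hadj (V : finType) (k : nat) (E : {set {set V}}) : rel {set V} :=
  fun A B => [&& A \in E, B \in E & #|A :&: B| == k.-1].

Definition strongly_conn (V : finType) (k : nat) (E : {set {set V}}) (A B : {set V}) :=
  connect (hadj k E) A B.

Definition every_scc_has_clique (V : finType) (k : nat) (E : {set {set V}}) : Prop :=
  forall D, D \in E -> exists S : {set V},
    #|S| = k.+1 /\
    (forall T : {set V}, T \subset S -> #|T| = k -> T \in E /\ strongly_conn k E D T).

Definition gen_pos (R : realType) (V : finType) (d : nat) (p : V -> 'rV[R]_d) (D : {set V}) :=
  forall c : V -> R, \sum_(x in D) c x = 0 -> \sum_(x in D) c x *: p x = 0 ->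
    forall x, x \in D -> c x = 0.

(* alpha D is the coefficient vector of the orthogonal projection p_D of the
   origin onto the affine span of p(D): supported on D, affine (sum 1), and
   p_D = sum alpha_x p(x) is orthogonal to the direction space of the span. *)
Definition is_proj_coeffs (R : realType) (V : finType) (d : nat) (p : V -> 'rV[R]_d)
    (D : {set V}) (a : V -> R) : Prop :=
  [/\ forall x, x \notin D -> a x = 0,
      \sum_(x in D) a x = 1 &
      forall y z, y \in D -> z \in D ->
        dotp (\sum_(x in D) a x *: p x) (p y - p z) = 0].

Definition hmatrix (R : realType) (V : finType) (E : {set {set V}})
    (alpha : {set V} -> V -> R) : 'M[R]_(#|E|, #|V|) :=
  \matrix_(i < #|E|, j < #|V|) alpha (enum_val i) (enum_val j).

(* Main.v *)
Require Import Defs.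
From HB Require Import structures.
From mathcomp Require Import all_boot all_order all_algebra.
From mathcomp Require Import reals mpoly.
From Stdlib Require Import FunctionalExtensionality.
From mathcomp Require Import ring lra.
Set Implicit Arguments. Unset Strict Implicit. Unset Printing Implicit Defensive.
Import Order.TTheory GRing.Theory Num.Theory.
Local Open Scope ring_scope.

Section Gen.
Variables (V : finType) (d : nat).
Local Notation I := (V * 'I_d)%type.

Definition pt (Rg : nzRingType) (x : I -> Rg) (v : V) : 'rV[Rg]_d := \row_i x (v, i).
Definition dotg (Rg : nzRingType) (u w : 'rV[Rg]_d) : Rg := \sum_(i < d) u 0 i * w 0 i.
Definition Lmat (Rg : nzRingType) (x : I -> Rg) m (ys : 'I_m.+1 -> V) : 'M[Rg]_m.+1 :=
  \matrix_(r, c) if r == ord0 then 1 else dotg (pt x (ys c)) (pt x (ys r) - pt x (ys ord0)).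
Definition cofL (Rg : comNzRingType) (x : I -> Rg) m (ys : 'I_m.+1 -> V) (j : 'I_m.+1) : Rg :=
  \adj (Lmat x ys) j ord0.

Lemma map_Lmat (R1 R2 : nzRingType) (f : {rmorphism R1 -> R2}) x m (ys : 'I_m.+1 -> V) :
  map_mx f (Lmat x ys) = Lmat (f \o x) ys.
Proof.
apply/matrixP => r c; rewrite !mxE; case: (r == ord0); first by rewrite rmorph1.
rewrite /dotg rmorph_sum; apply: eq_bigr => i _; rewrite rmorphM; by rewrite !mxE rmorphB /=.
Qed.

Lemma map_cofL (R1 R2 : comNzRingType) (f : {rmorphism R1 -> R2}) x m (ys : 'I_m.+1 -> V) j :
  f (cofL x ys j) = cofL (f \o x) ys j.
Proof. rewrite /cofL -map_Lmat -map_mx_adj. by rewrite !mxE. Qed.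

Lemma generic_nz (R : realType) (x : I -> R)
  (F : forall Rg : comNzRingType, (I -> Rg) -> Rg)
  (HF : forall (R1 R2 : comNzRingType) (f : {rmorphism R1 -> R2}) y, f (F R1 y) = F R2 (f \o y))
  (cq : I -> rat) :
  alg_indep_Q x -> F R (fun i => ratr (cq i)) != 0 -> F R x != 0.
Proof.
move=> Hx Hc.
pose g := F {mpoly rat[#|{: I}|]} (fun i => 'X_(enum_rank i)).
have ev : forall h : I -> R, mmap ratr (fun j => h (enum_val j)) g = F R h.
  move=> h; rewrite /g HF; congr (F R _); apply: functional_extensionality => i /=.
  by rewrite mmapX mmap1U enum_rankK.
have gnz : g != 0.
  by apply/eqP => g0; move: Hc; rewrite -ev g0 mmap0 eqxx.
by have := Hx g gnz; rewrite ev.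
Qed.

Definition coords (R : nzRingType) (p : V -> 'rV[R]_d) : I -> R := fun xi => p xi.1 0 xi.2.

Lemma pt_coords (R : nzRingType) (p : V -> 'rV[R]_d) v : pt (coords p) v = p v.
Proof. by apply/rowP => i; rewrite mxE. Qed.

Lemma dotgB (Rg : nzRingType) (u v w : 'rV[Rg]_d) : dotg u (v - w) = dotg u v - dotg u w.
Proof. by rewrite /dotg -sumrB; apply: eq_bigr => i _; rewrite !mxE mulrBr. Qed.

Lemma dotg_suml (Rg : comNzRingType) (J : Type) (r : seq J) (P : pred J) (a : J -> Rg) (u : J -> 'rV[Rg]_d) w :
  dotg (\sum_(j <- r | P j) a j *: u j) w = \sum_(j <- r | P j) a j * dotg (u j) w.
Proof.
rewrite /dotg; under eq_bigr => i _ do rewrite summxE big_distrl /=.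
rewrite exchange_big /=; apply: eq_bigr => j _; rewrite big_distrr /=.
by apply: eq_bigr => i _; rewrite !mxE mulrA.
Qed.

Lemma adj_sol (Rg : comNzRingType) m (L : 'M[Rg]_m.+1) (a : 'cV_m.+1) :
  L *m a = \col_r (r == ord0)%:R -> forall j, \det L * a j 0 = \adj L j ord0.
Proof.
move=> H j; have := congr1 (mulmx (\adj L)) H; rewrite mulmxA mul_adj_mx mul_scalar_mx.
move/matrixP => /(_ j 0); rewrite !mxE => ->.
rewrite (bigD1 ord0) //= big1 ?addr0 => [|r /negbTE Hr]; rewrite !mxE ?Hr ?eqxx ?mulr1 //.
by rewrite mulr0.
Qed.

Lemma alpha_L (R : realType) (p : V -> 'rV[R]_d) (D : {set V}) (a : V -> R) m (ys : 'I_m.+1 -> V) :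
  is_proj_coeffs p D a -> (forall r, ys r \in D) ->
  (forall F : V -> R, \sum_(v in D) F v = \sum_r F (ys r)) ->
  Lmat (coords p) ys *m (\col_c a (ys c)) = \col_r (r == ord0)%:R.
Proof.
case=> _ Hs Ho Hm Hsum; apply/matrixP => r j; rewrite !mxE.
under eq_bigr => c _ do rewrite !mxE.
case: (r == ord0).
  by under eq_bigr => c _ do rewrite mul1r; rewrite -Hs Hsum.
apply: (etrans _ (Ho (ys r) (ys ord0) (Hm _) (Hm _))); rewrite /dotp.
have -> : \sum_(i < d) (\sum_(x in D) a x *: p x) 0 i * (p (ys r) - p (ys ord0)) 0 i
   = dotg (\sum_(x in D) a x *: p x) (p (ys r) - p (ys ord0)) by [].
rewrite dotg_suml Hsum; apply: eq_bigr => c _; rewrite !pt_coords mulrC.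
by [].
Qed.

Definition evec (Rg : nzRingType) (a : nat) : 'rV[Rg]_d := \row_i ((i : nat) == a)%:R.

Lemma sum_delta (Rg : nzRingType) n (r : 'I_n) (F : 'I_n -> Rg) :
  \sum_c (c == r)%:R * F c = F r.
Proof.
rewrite (bigD1 r) // big1 => [|c /negbTE ->]; first by rewrite /= eqxx mul1r addr0.
by rewrite mul0r.
Qed.

Lemma dot_e (Rg : nzRingType) (a b : nat) : (a < d)%N -> dotg (evec Rg a) (evec Rg b) = (a == b)%:R.
Proof.
move=> ad; rewrite /dotg (bigD1 (Ordinal ad)) //= big1 => [|i Hi].
  by rewrite !mxE /= eqxx mul1r addr0.
rewrite !mxE; have -> : ((i : nat) == a) = false.
  by apply/negbTE; apply: contra Hi => /eqP Hia; apply/eqP/val_inj.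
by rewrite mul0r.
Qed.

Lemma det_nz_inj (F : fieldType) n (A : 'M[F]_n) :
  (forall w : 'cV_n, A *m w = 0 -> w = 0) -> \det A != 0.
Proof.
move=> H; rewrite -det_tr -unitfE -unitmxE -row_free_unit.
apply/inj_row_free => v Hv; have : A *m v^T = 0 by rewrite -[A]trmxK -trmx_mul Hv trmx0.
by move/H => /(congr1 trmx); rewrite trmxK trmx0.
Qed.

Section EConf.
Variables (Rg : nzRingType) (x : I -> Rg) (m : nat) (ys : 'I_m.+1 -> V).
Hypothesis Hpt : forall r, pt x (ys r) = evec Rg r.
Hypothesis Hmd : (m.+1 <= d)%N.

Lemma Lmat_e r c : Lmat x ys r c = if r == ord0 then 1 else (c == r)%:R - (c == ord0)%:R.
Proof.
rewrite mxE; case: (r == ord0) => //.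
by rewrite !Hpt dotgB !dot_e //; apply: leq_trans (ltn_ord c) Hmd.
Qed.
End EConf.

Lemma kerL_e (R : realType) (x : I -> R) m (ys : 'I_m.+1 -> V) :
  (forall r, pt x (ys r) = evec R r) -> (m.+1 <= d)%N ->
  forall w : 'cV_m.+1, Lmat x ys *m w = 0 -> w = 0.
Proof.
move=> Hpt Hmd w /matrixP Hw.
have Hr : forall r, w r 0 = w ord0 0.
  move=> r; case: (eqVneq r ord0) => [->//|rn0].
  have := Hw r 0; rewrite !mxE.
  under eq_bigr => c _ do rewrite (Lmat_e Hpt Hmd) (negbTE rn0) mulrBl.
  by rewrite sumrB !sum_delta => /eqP; rewrite subr_eq0 => /eqP.
have := Hw ord0 0; rewrite !mxE.
under eq_bigr => c _ do rewrite (Lmat_e Hpt Hmd) eqxx mul1r Hr.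
rewrite sumr_const card_ord => /eqP; rewrite mulrn_eq0 /= => /eqP w0.
by apply/matrixP => r j; rewrite (ord1 j) Hr w0 mxE.
Qed.

Lemma solL_e (Rg : fieldType) (x : I -> Rg) m (ys : 'I_m.+1 -> V) :
  (forall r, pt x (ys r) = evec Rg r) -> (m.+1 <= d)%N -> (m.+1%:R : Rg) != 0 ->
  Lmat x ys *m const_mx (m.+1%:R^-1) = \col_r (r == ord0)%:R.
Proof.
move=> Hpt Hmd Hm; apply/matrixP => r j; rewrite !mxE.
under eq_bigr => c _ do rewrite (Lmat_e Hpt Hmd) mxE.
case: (r == ord0) => /=.
  by rewrite sumr_const card_ord -[_ *+ _]mulr_natl mul1r mulfV.
under eq_bigr => c _ do rewrite mulrBl.
by rewrite sumrB !sum_delta subrr.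
Qed.

Definition c1 m (ys : 'I_m.+1 -> V) : I -> rat :=
  fun xi => if [pick r | ys r == xi.1] is Some r then ((xi.2 : nat) == r)%:R else 0.

Lemma pt_c1 (R : realType) m (ys : 'I_m.+1 -> V) : injective ys ->
  forall r, pt (fun i => ratr (c1 ys i) : R) (ys r) = evec R r.
Proof.
move=> inj r; apply/rowP => i; rewrite !mxE /c1 /=.
case: pickP => [r' /eqP/inj -> | /(_ r)]; first by rewrite ratr_nat.
by rewrite eqxx.
Qed.

Lemma G1 (R : realType) (p : V -> 'rV[R]_d) m (ys : 'I_m.+1 -> V) (D : {set V}) (a : V -> R) :
  (m.+1 <= d)%N -> generic p -> injective ys -> is_proj_coeffs p D a ->
  (forall r, ys r \in D) ->
  (forall F : V -> R, \sum_(v in D) F v = \sum_r F (ys r)) ->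
  forall j, a (ys j) != 0.
Proof.
move=> Hmd Hg inj Hpr Hm Hsum j.
have Hd := adj_sol (alpha_L Hpr Hm Hsum) j; rewrite mxE in Hd.
have Hnz : cofL (coords p) ys j != 0.
  apply: (@generic_nz R (coords p) (fun Rg x => cofL x ys j)
            (fun R1 R2 f y => map_cofL f y ys j) (c1 ys) Hg).
  set x := (fun i => ratr (c1 ys i) : R).
  have Hpt := pt_c1 R inj.
  have Hm1 : (m.+1%:R : R) != 0 by rewrite pnatr_eq0.
  have Hd2 := adj_sol (solL_e Hpt Hmd Hm1) j; rewrite mxE in Hd2.
  rewrite /= /cofL -Hd2 mulf_neq0 ?invr_eq0 //.
  by apply: det_nz_inj; apply: kerL_e.
by apply: contra Hnz => /eqP a0; rewrite /cofL -Hd a0 mulr0.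
Qed.

Lemma dotgC (Rg : comNzRingType) (u v : 'rV[Rg]_d) : dotg u v = dotg v u.
Proof. by apply: eq_bigr => i _; rewrite mulrC. Qed.

Lemma dotg0 (Rg : nzRingType) (u : 'rV[Rg]_d) : dotg u 0 = 0.
Proof. by rewrite /dotg big1 // => i _; rewrite mxE mulr0. Qed.

Lemma solL_gram (Rg : comNzRingType) (x : I -> Rg) m (ys : 'I_m.+1 -> V) (a : 'cV_m.+1) (k : Rg) :
  \sum_r a r 0 = 1 ->
  (forall r, \sum_c a c 0 * dotg (pt x (ys c)) (pt x (ys r)) = k) ->
  Lmat x ys *m a = \col_r (r == ord0)%:R.
Proof.
move=> H1 Hk; apply/matrixP => r j; rewrite !mxE (ord1 j).
under eq_bigr => c _ do rewrite mxE.
case: (r == ord0) => /=.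
  by under eq_bigr => c _ do rewrite mul1r.
under eq_bigr => c _ do rewrite dotgB mulrBl [_ * a c 0]mulrC [_ * a c 0]mulrC.
by rewrite sumrB !Hk subrr.
Qed.

Lemma Lmat_inj (R : realType) (x : I -> R) m (ys : 'I_m.+1 -> V) :
  (forall w : 'I_m.+1 -> R, \sum_r w r = 0 -> \sum_r w r *: pt x (ys r) = 0 -> forall r, w r = 0) ->
  forall w : 'cV_m.+1, Lmat x ys *m w = 0 -> w = 0.
Proof.
move=> Hai w /matrixP Hw.
have S0 : \sum_r w r 0 = 0.
  transitivity ((Lmat x ys *m w) ord0 0); last by rewrite Hw mxE.
  rewrite mxE; apply: eq_bigr => c _.
  by rewrite mxE eqxx mul1r.
set P := \sum_r w r 0 *: pt x (ys r).
have Ho : forall r, dotg P (pt x (ys r) - pt x (ys ord0)) = 0.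
  move=> r; case: (eqVneq r ord0) => [->|rn0]; first by rewrite subrr dotg0.
  transitivity ((Lmat x ys *m w) r 0); last by rewrite Hw mxE.
  rewrite /P dotg_suml mxE.
  by apply: eq_bigr => c _; rewrite mxE (negbTE rn0) mulrC.
have HP : P = \sum_r w r 0 *: (pt x (ys r) - pt x (ys ord0)).
  under [RHS]eq_bigr => r _ do rewrite scalerBr.
  by rewrite sumrB -scaler_suml S0 scale0r subr0.
have PP : dotg P P = 0.
  rewrite {2}HP dotgC dotg_suml big1 // => r _.
  by rewrite dotgC Ho mulr0.
have P0 : P = 0.
  apply/rowP => i; rewrite mxE.
  have Hi : P 0 i * P 0 i = 0.
    apply: (@psumr_eq0P R _ predT (fun i => P 0 i * P 0 i)) => //.
    by move=> j _; rewrite -expr2 sqr_ge0.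
  by move/eqP: Hi; rewrite mulf_eq0 orbb => /eqP.
move: (Hai (fun r => w r 0) S0 P0) => Hz.
by apply/matrixP => r j; rewrite (ord1 j) Hz mxE.
Qed.

Lemma split_max m (t : 'I_m.+2) : t = ord_max \/ exists t' : 'I_m.+1, t = widen_ord (leqnSn _) t'.
Proof.
have := ltn_ord t; rewrite ltnS leq_eqVlt => /orP [/eqP H | H].
  by left; apply/val_inj.
by right; exists (Ordinal H); apply/val_inj.
Qed.

Lemma wd_neq m (t : 'I_m.+1) : (widen_ord (leqnSn _) t == ord_max :> 'I_m.+2) = false.
Proof. by apply/negbTE; rewrite -val_eqE /= neq_ltn ltn_ord. Qed.

Definition qmax (Rg : nzRingType) m : 'rV[Rg]_d := \row_i (if ((i : nat) < m.+1)%N then -1 else 0).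

Definition qrow (Rg : nzRingType) m (t : 'I_m.+2) : 'rV[Rg]_d :=
  if t == ord_max then qmax Rg m else evec Rg t.

Lemma qrow_max (Rg : nzRingType) m : qrow Rg (ord_max : 'I_m.+2) = qmax Rg m.
Proof. by rewrite /qrow eqxx. Qed.

Lemma qrow_wd (Rg : nzRingType) m (t : 'I_m.+1) :
  qrow Rg (widen_ord (leqnSn _) t) = evec Rg t.
Proof. by rewrite /qrow wd_neq. Qed.

Lemma gram_em (Rg : nzRingType) m (a : nat) : (a < m.+1)%N -> (m.+1 <= d)%N ->
  dotg (evec Rg a) (qmax Rg m) = -1.
Proof.
move=> am md; have ad : (a < d)%N by apply: leq_trans am md.
rewrite /dotg (bigD1 (Ordinal ad)) //= big1 => [|i Hi].
  by rewrite !mxE /= eqxx am mul1r addr0.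
rewrite !mxE; have -> : ((i : nat) == a) = false.
  by apply/negbTE; apply: contra Hi => /eqP Hia; apply/eqP/val_inj.
by rewrite mul0r.
Qed.

Lemma gram_mm (Rg : nzRingType) m : (m.+1 <= d)%N -> dotg (qmax Rg m) (qmax Rg m) = m.+1%:R.
Proof.
move=> md; rewrite /dotg.
have -> : \sum_(i < d) qmax Rg m 0 i * qmax Rg m 0 i = \sum_(i < d) (if ((i : nat) < m.+1)%N then 1 else 0).
  apply: eq_bigr => i _; rewrite !mxE; case: ifP => _; first by rewrite mulrNN mulr1.
  by rewrite mulr0.
rewrite -big_mkcond /= -(big_ord_widen _ (fun _ => 1) md).
by rewrite sumr_const card_ord.
Qed.

Definition c2 m (zs : 'I_m.+2 -> V) : I -> rat :=
  fun xi => if [pick t | zs t == xi.1] is Some t then qrow rat t 0 xi.2 else 0.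

Lemma pt_c2 (R : realType) m (zs : 'I_m.+2 -> V) : injective zs ->
  forall t, pt (fun i => ratr (c2 zs i) : R) (zs t) = qrow R t.
Proof.
move=> inj t; apply/rowP => i; rewrite !mxE /c2 /=.
case: pickP => [t' /eqP/inj -> | /(_ t)]; last by rewrite eqxx.
rewrite /qrow; case: (t == ord_max); rewrite !mxE; last by rewrite ratr_nat.
by case: ifP => _; rewrite ?rmorphN1 ?rmorph0.
Qed.

Lemma sum_lift (M : zmodType) n (s : 'I_n.+1) (F : 'I_n.+1 -> M) :
  F s = 0 -> \sum_t F t = \sum_(r < n) F (lift s r).
Proof. by move=> Fs; rewrite (bigD1_ord s) //= Fs add0r. Qed.

Lemma wd_eq m (t s : 'I_m.+1) :
  (widen_ord (leqnSn _) t == widen_ord (leqnSn _) s :> 'I_m.+2) = (t == s).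
Proof. by rewrite -val_eqE. Qed.

Lemma sum_skip (Rg : nzRingType) n (s : 'I_n) (F : 'I_n -> Rg) :
  \sum_t (if t == s then 0 else F t) = \sum_t F t - F s.
Proof.
have H : forall t, (if t == s then 0 else F t) = F t - (t == s)%:R * F t.
  by move=> t; case: eqP => _; rewrite ?mul1r ?subrr ?mul0r ?subr0.
under eq_bigr => t _ do rewrite H.
by rewrite sumrB sum_delta.
Qed.

Definition Dl (R : realType) m : R := (m.+1 * m.+1 + m)%:R.

Lemma Dl_neq0 (R : realType) m : Dl R m != 0.
Proof. by rewrite /Dl pnatr_eq0 addn_eq0 muln_eq0. Qed.

Definition Aw (R : realType) m (s t : 'I_m.+2) : R :=
  if t == s then 0 else if s == ord_max then m.+1%:R^-1
  else if t == ord_max then m.+1%:R / Dl R m else m.+2%:R / Dl R m.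

Definition kap (R : realType) m (s : 'I_m.+2) : R :=
  if s == ord_max then m.+1%:R^-1 else (Dl R m)^-1.

Lemma Aw_max_wd (R : realType) m (t : 'I_m.+1) :
  Aw R ord_max (widen_ord (leqnSn _) t) = m.+1%:R^-1.
Proof. by rewrite /Aw wd_neq eqxx. Qed.

Lemma Aw_wd_wd (R : realType) m (s t : 'I_m.+1) :
  Aw R (widen_ord (leqnSn _) s) (widen_ord (leqnSn _) t) =
  if t == s then 0 else m.+2%:R / Dl R m.
Proof. by rewrite /Aw wd_eq !wd_neq. Qed.

Lemma Aw_wd_max (R : realType) m (s : 'I_m.+1) :
  Aw R (widen_ord (leqnSn _) s) ord_max = m.+1%:R / Dl R m.
Proof. by rewrite /Aw [ord_max == _]eq_sym wd_neq eqxx. Qed.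

Lemma Aw_diag (R : realType) m (s : 'I_m.+2) : Aw R s s = 0.
Proof. by rewrite /Aw eqxx. Qed.

Lemma Aw_sum (R : realType) m (s : 'I_m.+2) : \sum_t Aw R s t = 1.
Proof.
have Hk : (m.+1%:R : R) != 0 by rewrite pnatr_eq0.
have HD := Dl_neq0 R m.
rewrite big_ord_recr /=.
have [->|[s' ->]] := split_max s.
  under eq_bigr => t _ do rewrite Aw_max_wd.
  by rewrite Aw_diag addr0 sumr_const card_ord -[_ *+ _]mulr_natl mulfV.
under eq_bigr => t _ do rewrite Aw_wd_wd.
rewrite sum_skip Aw_wd_max sumr_const card_ord -[_ *+ _]mulr_natl.
move: HD; rewrite /Dl natrD natrM !mulrS => HD.
by field.
Qed.

Lemma ifmul0 (Rg : nzRingType) (b : bool) (x y : Rg) :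
  (if b then 0 else x) * y = if b then 0 else x * y.
Proof. by case: b; rewrite ?mul0r. Qed.

Section Gram.
Variables (R : realType) (m : nat).
Hypothesis md : (m.+1 <= d)%N.
Local Notation wd := (widen_ord (leqnSn m.+1)).
Local Notation q := (qrow R (m:=m)).

Lemma gram_ww (a b : 'I_m.+1) : dotg (q (wd a)) (q (wd b)) = (a == b)%:R.
Proof. by rewrite !qrow_wd dot_e //; apply: leq_trans (ltn_ord a) md. Qed.

Lemma gram_wm (a : 'I_m.+1) : dotg (q (wd a)) (q ord_max) = -1.
Proof. by rewrite qrow_wd qrow_max gram_em. Qed.

Lemma gram_mw (a : 'I_m.+1) : dotg (q ord_max) (q (wd a)) = -1.
Proof. by rewrite dotgC gram_wm. Qed.

Lemma gram_mm' : dotg (q ord_max) (q ord_max) = m.+1%:R.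
Proof. by rewrite qrow_max gram_mm. Qed.

Lemma Aw_gram (s u : 'I_m.+2) : u != s ->
  \sum_t Aw R s t * dotg (q t) (q u) = kap R s.
Proof.
move=> us.
have Hk : (m.+1%:R : R) != 0 by rewrite pnatr_eq0.
have HD := Dl_neq0 R m.
rewrite big_ord_recr /=.
have [Es|[s' Es]] := split_max s; rewrite Es in us *.
  have [Eu|[u' ->]] := split_max u; first by rewrite Eu eqxx in us.
  under eq_bigr => t _ do rewrite Aw_max_wd gram_ww mulrC.
  by rewrite sum_delta Aw_diag mul0r addr0 /kap eqxx.
rewrite /kap wd_neq.
have [->|[u' Eu]] := split_max u.
  under eq_bigr => t _ do rewrite Aw_wd_wd gram_wm ifmul0.
  rewrite sum_skip Aw_wd_max gram_mm' sumr_const card_ord -[_ *+ _]mulr_natl.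
  move: HD; rewrite /Dl natrD natrM !mulrS => HD.
  by field.
rewrite Eu in us *; rewrite wd_eq in us.
under eq_bigr => t _ do rewrite Aw_wd_wd gram_ww mulrC.
rewrite sum_delta (negbTE us) Aw_wd_max gram_mw.
move: HD; rewrite /Dl natrD natrM !mulrS => HD.
by field.
Qed.
End Gram.

Lemma sum_delta_nat (Rg : nzRingType) n (r : 'I_n) (F : 'I_n -> Rg) :
  \sum_(c < n) ((r : nat) == (c : nat))%:R * F c = F r.
Proof. by under eq_bigr => c _ do rewrite val_eqE eq_sym; exact: sum_delta. Qed.

Definition Nmat (Rg : comNzRingType) (x : I -> Rg) m (zs : 'I_m.+2 -> V) : 'M[Rg]_m.+2 :=
  \matrix_(s, t) if unlift s t is Some r then cofL x (zs \o lift s) r else 0.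

Lemma map_Nmat (R1 R2 : comNzRingType) (f : {rmorphism R1 -> R2}) x m (zs : 'I_m.+2 -> V) :
  map_mx f (Nmat x zs) = Nmat (f \o x) zs.
Proof.
apply/matrixP => s t; rewrite !mxE; case: (unlift s t) => [r|]; last exact: rmorph0.
exact: map_cofL.
Qed.

Section Conf2.
Variables (R : realType) (m : nat) (zs : 'I_m.+2 -> V) (x2 : I -> R).
Hypothesis md : (m.+1 <= d)%N.
Hypothesis Hpt : forall t, pt x2 (zs t) = qrow R t.
Local Notation wd := (widen_ord (leqnSn m.+1)).

Lemma facet_sol (s : 'I_m.+2) :
  Lmat x2 (zs \o lift s) *m \col_r Aw R s (lift s r) = \col_r (r == ord0)%:R.
Proof.
apply: (solL_gram (k := kap R s)).
  under eq_bigr => r _ do rewrite mxE.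
  by rewrite -(sum_lift (F := Aw R s)) ?Aw_diag // Aw_sum.
move=> r; under eq_bigr => c _ do rewrite mxE /= !Hpt.
rewrite -(sum_lift (F := fun t => Aw R s t * dotg (qrow R t) (qrow R (lift s r)))) /=.
  by apply: Aw_gram => //; rewrite eq_sym neq_lift.
by rewrite Aw_diag mul0r.
Qed.

Lemma facet_inj (s : 'I_m.+2) :
  forall w : 'cV_m.+1, Lmat x2 (zs \o lift s) *m w = 0 -> w = 0.
Proof.
apply: Lmat_inj => w _ Hw.
pose W' t := if unlift s t is Some r then w r else 0.
have HW' : \sum_t W' t *: qrow R t = 0.
  rewrite (sum_lift (s := s) (F := fun t => W' t *: qrow R t)) /W' ?unlift_none ?scale0r //.
  transitivity (\sum_r w r *: pt x2 ((zs \o lift s) r)); last exact: Hw.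
  by apply: eq_bigr => r _; rewrite liftK /= Hpt.
have coord : forall i' : 'I_m.+1, W' (wd i') = W' ord_max.
  move=> i'; have id : (i' < d)%N by apply: leq_trans (ltn_ord i') md.
  have := congr1 (fun M : 'rV_d => M 0 (Ordinal id)) HW'; rewrite summxE mxE big_ord_recr /=.
  under eq_bigr => t _ do rewrite mxE qrow_wd mxE /= mulrC.
  rewrite sum_delta_nat mxE qrow_max mxE /= ltn_ord => /eqP.
  by rewrite mulrN1 subr_eq0 => /eqP.
have Wmax : W' ord_max = 0.
  have [Es|[s' Es]] := split_max s; first by rewrite /W' -Es unlift_none.
  by rewrite -(coord s') /W' -Es unlift_none.
have W0 : forall t, W' t = 0.
  by move=> t; have [->|[t' ->]] := split_max t; rewrite ?coord Wmax.
by move=> r; have := W0 (lift s r); rewrite /W' liftK.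
Qed.

Lemma Nconf_det : \det (Nmat x2 zs) != 0.
Proof.
apply: det_nz_inj => u Hu.
have Hk : (m.+1%:R : R) != 0 by rewrite pnatr_eq0.
have Hk2 : (m.+2%:R : R) != 0 by rewrite pnatr_eq0.
have HD := Dl_neq0 R m.
have HL : forall s, \det (Lmat x2 (zs \o lift s)) != 0 := fun s => det_nz_inj (@facet_inj s).
have Hcof s r : cofL x2 (zs \o lift s) r = \det (Lmat x2 (zs \o lift s)) * Aw R s (lift s r).
  by rewrite /cofL -(adj_sol (@facet_sol s) r) mxE.
have E s : \sum_t Aw R s t * u t 0 = 0.
  have := congr1 (fun M : 'M_(m.+2,1) => M s 0) Hu; rewrite !mxE.
  rewrite (sum_lift (s := s)); last by rewrite /Nmat mxE unlift_none mul0r.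
  under eq_bigr => r _ do rewrite /Nmat mxE liftK Hcof -mulrA.
  rewrite -mulr_sumr => /eqP; rewrite mulf_eq0 (negbTE (HL s)) /= => /eqP.
  by rewrite (sum_lift (s := s)) ?Aw_diag ?mul0r.
have S : \sum_t u (wd t) 0 = 0.
  have := E ord_max; rewrite big_ord_recr /= Aw_diag mul0r addr0.
  under eq_bigr => t _ do rewrite Aw_max_wd.
  by rewrite -mulr_sumr => /eqP; rewrite mulf_eq0 invr_eq0 (negbTE Hk) /= => /eqP.
have H2 s' : m.+1%:R * u ord_max 0 = m.+2%:R * u (wd s') 0.
  have := E (wd s'); rewrite big_ord_recr /=.
  under eq_bigr => t _ do rewrite Aw_wd_wd ifmul0.
  rewrite sum_skip -mulr_sumr S mulr0 sub0r Aw_wd_max addrC => /eqP.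
  rewrite subr_eq0 => /eqP.
  rewrite -!mulrA !(mulrCA _ (Dl R m)^-1) => /(mulfI (invr_neq0 HD)).
  by [].
have umax : u ord_max 0 = 0.
  have : \sum_t m.+2%:R * u (wd t) 0 = 0 by rewrite -mulr_sumr S mulr0.
  under eq_bigr => t _ do rewrite -H2.
  rewrite sumr_const card_ord => /eqP; rewrite mulrn_eq0 /= mulf_eq0 (negbTE Hk) /=.
  by move/eqP.
apply/matrixP => t j; rewrite (ord1 j) mxE.
have [->|[t' ->]] := split_max t => //.
by have := H2 t'; rewrite umax mulr0 => /eqP; rewrite eq_sym mulf_eq0 (negbTE Hk2) /= => /eqP.
Qed.
End Conf2.

Lemma facet_sum (R : realType) m (ys : 'I_m.+1 -> V) : injective ys ->
  forall F : V -> R, \sum_(v in ys @: setT) F v = \sum_r F (ys r).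
Proof.
move=> inj F; rewrite big_imset /=; last by move=> a b _ _; apply: inj.
by apply: eq_bigl => i; rewrite in_setT.
Qed.

Lemma G2 (R : realType) (p : V -> 'rV[R]_d) m (zs : 'I_m.+2 -> V) (a : 'I_m.+2 -> V -> R)
    (W : V -> R) :
  (m.+1 <= d)%N -> generic p -> injective zs ->
  (forall s, is_proj_coeffs p ((zs \o lift s) @: setT) (a s)) ->
  (forall s, \sum_r a s (zs (lift s r)) * W (zs (lift s r)) = 0) ->
  forall t, W (zs t) = 0.
Proof.
move=> md Hg inj Hpr HW.
have injs s : injective (zs \o lift s) by apply: inj_comp inj (@lift_inj _ s).
have Hmem s r : (zs \o lift s) r \in (zs \o lift s) @: setT by apply: imset_f; rewrite in_setT.
have Hd s r : \det (Lmat (coords p) (zs \o lift s)) * a s (zs (lift s r))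
    = cofL (coords p) (zs \o lift s) r.
  have := adj_sol (alpha_L (Hpr s) (Hmem s) (facet_sum (injs s))) r.
  by rewrite mxE.
have Hnz : \det (Nmat (coords p) zs) != 0.
  apply: (@generic_nz R (coords p) (fun Rg x => \det (Nmat x zs)) _ (c2 zs) Hg).
    by move=> R1 R2 f y; rewrite -det_map_mx map_Nmat.
  by apply: Nconf_det => //; apply: pt_c2.
have HNw : Nmat (coords p) zs *m \col_t W (zs t) = 0.
  apply/matrixP => s j; rewrite !mxE (sum_lift (s := s)); last first.
    by rewrite /Nmat mxE unlift_none mul0r.
  under eq_bigr => r _ do rewrite /Nmat !mxE liftK -Hd -mulrA.
  by rewrite -mulr_sumr HW mulr0.
move=> t.
have := congr1 (mulmx (\adj (Nmat (coords p) zs))) HNw.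
rewrite mulmxA mul_adj_mx mul_scalar_mx mulmx0 => /matrixP /(_ t 0).
by rewrite !mxE => /eqP; rewrite mulf_eq0 (negbTE Hnz) /= => /eqP.
Qed.
End Gen.

Lemma connect_back (T : finType) (e : rel T) (P : T -> Prop) :
  (forall a b, e a b -> P b -> P a) -> forall a b, connect e a b -> P b -> P a.
Proof.
move=> step a b /connectP [s].
elim: s a => [|c s IH] a /= => [_ -> //|/andP [eac pth] lst Pb].
by apply: (step _ c eac); apply: IH.
Qed.

Lemma enum_nth_facts (V : finType) (B : {set V}) (u : V) n :
  #|B| = n.+1 -> u \in B ->
  let ys := fun r : 'I_n.+1 => nth u (enum B) r in
  [/\ injective ys, forall r, ys r \in B, exists j, ys j = u &
      forall (R : realType) (F : V -> R), \sum_(v in B) F v = \sum_r F (ys r)].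
Proof.
move=> HB Hu ys.
have Hsz : size (enum B) = n.+1 by rewrite -cardE.
split.
- move=> a b /eqP; rewrite /ys nth_uniq ?Hsz ?enum_uniq // => /eqP; apply: val_inj.
- by move=> r; rewrite /ys -mem_enum mem_nth ?Hsz.
- have Hi : (index u (enum B) < n.+1)%N by rewrite -Hsz index_mem mem_enum.
  by exists (Ordinal Hi); rewrite /ys nth_index ?mem_enum.
- move=> R F; rewrite -big_enum (big_nth u) Hsz big_mkord.
  by apply: eq_bigr.
Qed.

Theorem lemma3p4 (R : realType) (V : finType) (k : nat) (E : {set {set V}})
  (d : nat) (p : V -> 'rV[R]_d) (alpha : {set V} -> V -> R) :
  k_uniform k E ->
  (forall v : V, exists2 D, D \in E & v \in D) ->
  every_scc_has_clique k E ->
  (k <= d)%N ->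
  generic p ->
  (forall D, D \in E -> gen_pos p D) ->
  (forall D, D \in E -> is_proj_coeffs p D (alpha D)) ->
  \rank (hmatrix E alpha) = #|V|.
Proof.
move=> Hunif Hcov Hcl Hkd Hgen _ Hproj.
rewrite -mxrank_tr; apply/eqP.
have : row_free (hmatrix E alpha)^T; last by [].
apply/inj_row_free => w Hw.
pose W v := w 0 (enum_rank v).
have HW : forall D, D \in E -> \sum_(v in D) alpha D v * W v = 0.
  move=> D HD.
  transitivity ((w *m (hmatrix E alpha)^T) 0 (enum_rank_in HD D)); last by rewrite Hw mxE.
  rewrite mxE big_mkcond /= (reindex (fun j : 'I_#|V| => enum_val j)) /=; last first.
    by apply: onW_bij; apply: enum_val_bij.
  apply: eq_bigr => j _; rewrite !mxE enum_rankK_in // /W enum_valK.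
  case: ifP => Hn; first by rewrite mulrC.
  by case: (Hproj D HD) => H0 _ _; rewrite H0 ?mulr0 // Hn.
suff W0 : forall v, W v = 0.
  by apply/rowP => j; rewrite mxE -(enum_valK j); apply: W0.
move=> v; have [D HD Hv] := Hcov v.
case: k Hunif Hcl Hkd HW {Hcov} => [|k'] Hunif Hcl Hkd HW.
  by move: Hv; rewrite (cards0_eq (Hunif D HD)) in_set0.
have Hnz : forall B u, B \in E -> u \in B -> alpha B u != 0.
  move=> B u HB Hu.
  have [inj Hm [j Hj] Hs] := enum_nth_facts (Hunif B HB) Hu.
  by rewrite -Hj; apply: (G1 Hkd Hgen inj (Hproj B HB) Hm (Hs R)).
have [S [HS Hsub]] := Hcl D HD.
have Sv : exists v0, v0 \in S.
  by apply/set0Pn; apply/eqP => S0; move: HS; rewrite S0 cards0.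
have [v0 Hv0] := Sv.
have [injz Hmz _ _] := enum_nth_facts HS Hv0.
set zs := fun r : 'I_k'.+2 => nth v0 (enum S) r in injz Hmz.
have injs s : injective (zs \o lift s) by apply: inj_comp injz (@lift_inj _ s).
have Tsub s : (zs \o lift s) @: setT \subset S.
  by apply/subsetP => x /imsetP [r _ ->]; apply: Hmz.
have Tcard s : #|(zs \o lift s) @: setT| = k'.+1.
  by rewrite card_imset // cardsT card_ord.
have WS : forall t, W (zs t) = 0.
  apply: (G2 (a := fun s => alpha ((zs \o lift s) @: setT)) Hkd Hgen injz).
    by move=> s; apply: Hproj; case: (Hsub _ (Tsub s) (Tcard s)).
  move=> s; have := HW _ (proj1 (Hsub _ (Tsub s) (Tcard s))).
  by rewrite (facet_sum (injs s)).
have [HT0 HC0] := Hsub _ (Tsub ord0) (Tcard ord0).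
pose P (B : {set V}) := forall u, u \in B -> W u = 0.
have PT0 : P ((zs \o lift ord0) @: setT).
  move=> u /imsetP [r _ ->]; exact: WS.
have step : forall A B, hadj k'.+1 E A B -> P B -> P A.
  move=> A B /and3P [HA HB /eqP HAB] PB u Hu.
  case HuB : (u \in B); first exact: PB.
  have Hc : #|A :\: B| == 1%N by rewrite cardsD (Hunif A HA) HAB subSnn.
  have [u0 Hu0] := cards1P Hc.
  have Hdiff : forall y, y \in A -> y \notin B -> y = u.
    move=> y Hy Hy'; have : y \in A :\: B by rewrite inE Hy Hy'.
    have : u \in A :\: B by rewrite inE Hu HuB.
    by rewrite Hu0 !inE => /eqP -> /eqP ->.
  have := HW A HA; rewrite (bigD1 u) //= big1 ?addr0.
    by move/eqP; rewrite mulf_eq0 (negbTE (Hnz _ _ HA Hu)) /= => /eqP.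
  move=> y /andP [Hy Hyu]; case HyB : (y \in B); first by rewrite PB // mulr0.
  by move: Hyu; rewrite (Hdiff y Hy) ?HyB ?eqxx.
have PD : P D.
  by apply: (connect_back step HC0 PT0).
exact: PD.
Qed.
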